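(* Let $S=\{p_1,\dots,p_m\}$ be a finite set of possibly partial probability distributions, all with the same total mass $\textsc{Mass}(S)>0$. Let $\textsc{OPT}_S$ be a minimum-entropy coupling of $S$. Then $$H(\textsc{OPT}_S)\ \ge\ H(\textsc{Profile}_S)\triangleq\int_0^{\textsc{Mass}(S)}\log_2\!\left(\frac{1}{\textsc{Profile}_S(x)}\right)dx .$$
   Context: A possibly partial distribution $p$ is a finite vector of nonnegative reals $p(1)\ge p(2)\ge\dots\ge p(n)$ (always sorted in non-increasing order) with total mass $\textsc{Mass}(p)=\sum_j p(j)\le 1$. A coupling of $p_1,\dots,p_m$ is a nonnegative array $\mathcal C(i_1,\dots,i_m)$ such that for every $k$ and every state $i_k$, the sum of $\mathcal C$ over all tuples with $k$-th coordinate $i_k$ equals $p_k(i_k)$. Its entropy is $H(\mathcal C)=\sum \mathcal C(i)\log_2(1/\mathcal C(i))$ (with $0\log(1/0)=0$); $\textsc{OPT}_S$ is a coupling of minimum entropy. For a possibly partial distribution $p$, $\textsc{Sketch}_p:(0,\textsc{Mass}(p)]\to\mathbb R$ is defined by $\textsc{Sketch}_p(x)=p(i)$ for $x\in\big(\sum_{j>i}p(j),\sum_{j\ge i}p(j)\big]$. The profile is $\textsc{Profile}_S(x)=\min_{p\in S}\textsc{Sketch}_p(x)$ for $x\in(0,\textsc{Mass}(S)]$. *)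

(* Defs.v *)
From HB Require Import structures.
From mathcomp Require Import all_boot all_order all_algebra.
From mathcomp Require Import all_classical all_reals all_analysis.
Set Implicit Arguments. Unset Strict Implicit. Unset Printing Implicit Defensive.
Import Order.TTheory GRing.Theory Num.Theory.
Local Open Scope ring_scope.

Section Defs.
Variable R : realType.

Definition log2 (y : R) : R := ln y / ln 2.

Definition is_ppd (n : nat) (p : 'I_n -> R) : Prop :=
  (forall i, 0 <= p i) /\
  (forall i j : 'I_n, (i <= j)%N -> p j <= p i) /\
  \sum_(i < n) p i <= 1.

Definition Mass (n : nat) (p : 'I_n -> R) : R := \sum_(i < n) p i.

Definition tail_gt (n : nat) (p : 'I_n -> R) (i : 'I_n) : R :=
  \sum_(j < n | (i < j)%N) p j.
Definition tail_ge (n : nat) (p : 'I_n -> R) (i : 'I_n) : R :=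
  \sum_(j < n | (i <= j)%N) p j.

(* Sketch_p(x) = p(i) for x in (sum_{j>i} p(j), sum_{j>=i} p(j)];
   these intervals are pairwise disjoint, so at most one term is nonzero.
   (Outside (0, Mass p] the value is 0, but it is only used on (0, Mass p].) *)
Definition Sketch (n : nat) (p : 'I_n -> R) (x : R) : R :=
  \sum_(i < n) (if (tail_gt p i < x) && (x <= tail_ge p i) then p i else 0).

Definition Profile (m : nat) (n : 'I_m.+1 -> nat)
    (p : forall k : 'I_m.+1, 'I_(n k) -> R) (x : R) : R :=
  \big[Num.min/Sketch (p ord0) x]_(k < m.+1) Sketch (p k) x.

Definition joint (m : nat) (n : 'I_m.+1 -> nat) : finType :=
  {dffun forall k : 'I_m.+1, 'I_(n k)}.

Definition is_coupling (m : nat) (n : 'I_m.+1 -> nat)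
    (p : forall k : 'I_m.+1, 'I_(n k) -> R) (C : joint n -> R) : Prop :=
  (forall t, 0 <= C t) /\
  (forall (k : 'I_m.+1) (i : 'I_(n k)), \sum_(t : joint n | t k == i) C t = p k i).

Definition entropy (m : nat) (n : 'I_m.+1 -> nat) (C : joint n -> R) : R :=
  \sum_(t : joint n) (if C t == 0 then 0 else C t * log2 (1 / C t)).

Definition is_min_entropy_coupling (m : nat) (n : 'I_m.+1 -> nat)
    (p : forall k : 'I_m.+1, 'I_(n k) -> R) (C : joint n -> R) : Prop :=
  is_coupling p C /\
  (forall C' : joint n -> R, is_coupling p C' -> entropy C <= entropy C').

End Defs.

(* Main.v *)
Set Warnings "-all".
Require Import Defs.
From HB Require Import structures.
From mathcomp Require Import all_boot all_order all_algebra.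
From mathcomp Require Import all_classical all_reals all_analysis.
From mathcomp Require Import measurable_realfun.
Import Order.TTheory GRing.Theory Num.Theory.
Local Open Scope ring_scope.
Local Open Scope classical_set_scope.

Section Gen.
Context {R : realType}.

Definition hterm (c : R) : R := if c == 0 then 0 else c * log2 (1 / c).

Lemma in_ocP (a b x : R) : x \in `]a, b]%R -> a < x <= b.
Proof. by rewrite in_itv. Qed.

Lemma mEf (f : R -> R) (mf : measurable_fun setT f) (D : set R) :
  measurable D -> measurable_fun D (EFin \o f).
Proof. by move=> mD; apply/measurable_EFinP; exact: measurable_funS mf. Qed.

Lemma piece (f : R -> R) (mf : measurable_fun setT f) (a c L : R) :
  0 <= c ->
  (forall x, a < x <= a + c -> 0 <= f x <= L) ->
  (\int[lebesgue_measure]_(x in `]a%R, (a + c)%R]) (f x)%:E <= (L * c)%:E)%E.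
Proof.
move=> c0 hf.
have mD : measurable (`]a, a + c] : set R) by exact: measurable_itv.
have [c00|cn0] := eqVneq c 0.
  rewrite c00 mulr0.
  apply: (@le_trans _ _ (\int[lebesgue_measure]_(x in `]a%R, (a + 0)%R]) (cst 0%R x)%:E)%E).
    have mD0 : measurable (`]a, a + 0] : set R) by exact: measurable_itv.
    apply: ge0_le_integral => //.
    - by move=> x /in_ocP; rewrite addr0 => /andP[h1 h2]; have := lt_le_trans h1 h2; rewrite ltxx.
    - exact: mEf.
    - exact: mEf (measurable_cst _) _ mD0.
    - by move=> x /in_ocP; rewrite addr0 => /andP[h1 h2]; have := lt_le_trans h1 h2; rewrite ltxx.
  by rewrite integral0.
have cpos : 0 < c by rewrite lt_neqAle eq_sym cn0 c0.
have ac : a < a + c by rewrite ltrDl.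
have L0 : 0 <= L.
  have /hf /andP[h1 h2] : a < a + c <= a + c by rewrite ac lexx.
  exact: le_trans h2.
apply: (@le_trans _ _ (\int[lebesgue_measure]_(x in `]a%R, (a + c)%R]) (cst (L%:E) x))%E).
  apply: ge0_le_integral => //.
  - by move=> x /in_ocP /hf /andP[]; rewrite lee_fin.
  - exact: mEf.
  - by move=> x /in_ocP /hf /andP[_ ]; rewrite lee_fin.
rewrite integral_cst //.
have := lebesgue_measure_itv `]a, (a + c)]%R; rewrite /= lte_fin ac => ->.
by rewrite -EFinD addrAC subrr add0r -EFinM.
Qed.

Lemma main_seq (f : R -> R) (mf : measurable_fun setT f) (cs : seq R) (a : R) :
  (forall c, c \in cs -> 0 <= c) ->
  (forall x, a < x <= a + \sum_(c <- cs) c -> 0 <= f x) ->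
  (forall pre c post, cs = pre ++ c :: post -> 0 < c ->
     forall x, a + \sum_(y <- pre) y < x <= a + \sum_(y <- pre) y + c ->
     f x <= log2 (1 / c)) ->
  (\int[lebesgue_measure]_(x in `]a%R, (a + \sum_(c <- cs) c)%R]) (f x)%:E
     <= (\sum_(c <- cs) hterm c)%:E)%E.
Proof.
elim: cs a => [|c cs IH] a cs0 f0 hk.
  rewrite !big_nil; have := @piece f mf a 0 0 (lexx 0); rewrite mulr0; apply.
  by move=> x; rewrite addr0 => /andP[h1 h2]; have := lt_le_trans h1 h2; rewrite ltxx.
have c0 : 0 <= c by apply: cs0; rewrite inE eqxx.
have rest0 : 0 <= \sum_(y <- cs) y.
  by rewrite big_seq; apply: sumr_ge0 => y yi; apply: cs0; rewrite inE yi orbT.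
rewrite !big_cons.
have mU : `]a, a + (c + \sum_(y <- cs) y)] = `]a, a + c] `|` `](a + c), (a + c) + \sum_(y <- cs) y].
  apply/seteqP; split => x /=; rewrite !in_itv /= addrA.
    move=> /andP[h1 h2]; case: (leP x (a + c)) => h3.
      by left; apply/andP; split.
    by right; apply/andP; split.
  case=> /andP[h1 h2]; apply/andP; split => //.
    by rewrite (le_trans h2) // lerDl.
  by rewrite (le_lt_trans _ h1) // lerDl.
rewrite mU ge0_integral_setU //; last 3 first.
- apply: mEf => //; apply: measurableU; exact: measurable_itv.
- move=> x; rewrite -mU => hx; rewrite lee_fin; apply: f0. rewrite big_cons; exact: (@in_ocP a (a + (c + \sum_(y <- cs) y)) x hx).
- rewrite disj_set2E; apply/eqP/seteqP; split => x //= [].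
  move=> /in_ocP /andP[_ h1] /in_ocP /andP[h2 _].
  by have := le_lt_trans h1 h2; rewrite ltxx.
rewrite EFinD; apply: leeD.
  have -> : hterm c = (if c == 0 then 0 else log2 (1 / c)) * c.
    by rewrite /hterm; case: eqP => _; rewrite ?mul0r // mulrC.
  apply: piece => // x /andP[h1 h2].
  rewrite f0 /=; last first.
    by apply/andP; split => //; rewrite big_cons addrA (le_trans h2) // lerDl.
  case: eqP => [c0'|/eqP cn0].
    by move: h2; rewrite c0' addr0 => h2; have := lt_le_trans h1 h2; rewrite ltxx.
  apply: (hk [::] c cs) => //; first by rewrite lt_neqAle eq_sym cn0.
  by rewrite big_nil addr0 h1 h2.
apply: IH.
- by move=> y yi; apply: cs0; rewrite inE yi orbT.
- move=> x /andP[h1 h2]; apply: f0; rewrite -addrA in h2.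
  apply/andP; split; last by rewrite big_cons.
  by apply: le_lt_trans h1; rewrite lerDl.
move=> pre d post hcs dpos x hx.
apply: (hk (c :: pre) d post) => //; first by rewrite hcs.
by rewrite big_cons addrA.
Qed.

Lemma cell_exists (n : nat) (p : 'I_n -> R) (x : R) :
  (forall i, 0 <= p i) -> 0 < x -> x <= \sum_(i < n) p i ->
  exists i : 'I_n, (tail_gt p i < x) && (x <= tail_ge p i).
Proof.
move=> p0 x0 xs.
case: n p p0 xs => [|n'] p p0 xs.
  by move: xs; rewrite big_ord0 => /(lt_le_trans x0); rewrite ltxx.
have P0 : x <= tail_ge p ord0 by rewrite /tail_ge (eq_bigl xpredT).
case: (@arg_maxnP _ ord0 (fun i : 'I_n'.+1 => x <= tail_ge p i) (fun i : 'I_n'.+1 => nat_of_ord i) P0) => i Pi maxi.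
exists i; apply/andP; split => //.
rewrite ltNge; apply/negP => H.
have [lt_i|ge_i] := ltnP i.+1 n'.+1.
  by have := maxi (Ordinal lt_i) H; rewrite /= ltnn.
have : tail_gt p i = 0.
  rewrite /tail_gt big_pred0 // => j; apply/negbTE; rewrite -leqNgt.
  by rewrite -ltnS (leq_trans (ltn_ord j) ge_i).
by move=> E; move: H; rewrite E => /(lt_le_trans x0); rewrite ltxx.
Qed.

Lemma meas_bigmin (I : Type) (r : seq I) (g0 : R -> R) (F : I -> R -> R) :
  measurable_fun setT g0 -> (forall i, measurable_fun setT (F i)) ->
  measurable_fun setT (fun x => \big[Num.min/g0 x]_(i <- r) F i x).
Proof.
move=> m0 mF; elim: r => [|i r IH].
  by rewrite (_ : (fun x => _) = g0) //; apply/funext => x; rewrite big_nil.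
rewrite (_ : (fun x => _) = (F i) \min (fun x => \big[Num.min/g0 x]_(j <- r) F j x)).
  exact: measurable_minr.
by apply/funext => x; rewrite big_cons.
Qed.

Lemma meas_step (a b v : R) :
  measurable_fun setT (fun x : R => if (a < x) && (x <= b) then v else 0).
Proof.
rewrite (_ : (fun x : R => _) = ( *%R^~ v) \o (\1_(`]a, b]) : R -> R)).
  apply: measurableT_comp; first exact: mulrr_measurable.
  apply: measurable_indic; exact: measurable_itv.
apply/funext => x /=; rewrite indicE.
case: ifP => h.
  by rewrite mem_set ?mul1r //= in_itv /= h.
by rewrite memNset ?mul0r //= in_itv /= h.
Qed.

Lemma meas_sketch (n : nat) (p : 'I_n -> R) : measurable_fun setT (Sketch p).
Proof. apply: measurable_sum => i; exact: meas_step. Qed.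

End Gen.

Theorem theorem1 (R : realType) (m : nat) (n : 'I_m.+1 -> nat)
    (p : forall k : 'I_m.+1, 'I_(n k) -> R) (M : R) (C : joint n -> R) :
  (forall k, is_ppd (p k)) ->
  (forall k, Mass (p k) = M) ->
  0 < M ->
  is_min_entropy_coupling p C ->
  (\int[lebesgue_measure]_(x in `]0%R, M%R]) (log2 (1 / Profile p x))%:E
     <= (entropy C)%:E)%E.
Proof.
move=> hppd hmass M0 [[C0 Cmarg] _].
set f := fun x => log2 (1 / Profile p x).
set cs := sort <=%R (map C (enum (joint n))).
have perm_cs : perm_eq cs (map C (enum (joint n))) by rewrite /cs perm_sort.
have ln2pos : 0 < ln (2 : R) by apply: ln_gt0; rewrite ltr1n.
have sumC : \sum_(t : joint n) C t = M.
  rewrite -(hmass ord0) /Mass (partition_big (fun t : joint n => t ord0) xpredT) //.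
  by apply: eq_bigr => i _; rewrite -Cmarg.
have sum_cs : \sum_(c <- cs) c = M.
  by rewrite (perm_big _ perm_cs) big_map big_enum /= -sumC.
have ent : entropy C = \sum_(c <- cs) hterm c.
  by rewrite (perm_big _ perm_cs) big_map big_enum /=.
have cs0 : forall c, c \in cs -> 0 <= c.
  by move=> c; rewrite (perm_mem perm_cs) => /mapP[t _ ->]; exact: C0.
have Pr_le1 : forall x, Profile p x <= 1.
  move=> x; rewrite /Profile; apply: le_trans (bigmin_le_id _ _ _ _) _.
  have [p0 [_ psum]] := hppd ord0.
  apply: le_trans psum; apply: ler_sum => i _; case: ifP => _ //.
have f0 : forall x, 0 <= f x.
  move=> x; rewrite /f /log2; apply: divr_ge0; last exact: ltW.
  have [P0|Ppos] := lerP (Profile p x) 0.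
    by rewrite ln0 // div1r invr_le0.
  by apply: ln_ge0; rewrite div1r invf_ge1 //; exact: Pr_le1.
have mf : measurable_fun setT f.
  rewrite (_ : f = ( *%R^~ (- (ln (2:R))^-1)) \o (@ln R \o Profile p)).
    apply: measurableT_comp; first exact: mulrr_measurable.
    apply: measurableT_comp; first exact: measurable_ln.
    apply: meas_bigmin => [|k]; exact: meas_sketch.
  apply/funext => x /=; rewrite /f /log2 div1r.
  have [P0|Ppos] := lerP (Profile p x) 0.
    by rewrite (ln0 P0) (@ln0 _ (Profile p x)^-1) ?invr_le0 // !mul0r.
  by rewrite lnV ?posrE // mulrN mulNr.
have Cle : forall k t, C t <= p k (t k).
  move=> k t; rewrite -Cmarg (bigD1 t) //= lerDl.
  by apply: sumr_ge0 => ? _; exact: C0.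
have H3 : forall pre c post, cs = pre ++ c :: post -> 0 < c ->
     forall x, 0 + \sum_(y <- pre) y < x <= 0 + \sum_(y <- pre) y + c ->
     f x <= log2 (1 / c).
  move=> pre c post hcs cpos x; rewrite add0r => /andP[h1 h2].
  have pre0 : 0 <= \sum_(y <- pre) y.
    rewrite big_seq; apply: sumr_ge0 => y yi; apply: cs0.
    by rewrite hcs mem_cat yi.
  have post0 : 0 <= \sum_(y <- post) y.
    rewrite big_seq; apply: sumr_ge0 => y yi; apply: cs0.
    by rewrite hcs mem_cat inE yi !orbT.
  have x0 : 0 < x by apply: le_lt_trans h1.
  have xM : x <= M.
    apply: (le_trans h2); rewrite -sum_cs hcs big_cat big_cons /= addrA.
    by rewrite lerDl.
  have srt : sorted <=%R cs by apply: sort_sorted; exact: le_total.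
  have post_ge : all (fun y => c <= y) post.
    move: srt; rewrite hcs sorted_cat_cons => /andP[_ pth].
    exact: (order_path_min le_trans pth).
  have small : \sum_(t | C t < c) C t <= \sum_(y <- pre) y.
    have -> : \sum_(t | C t < c) C t = \sum_(y <- map C (enum (joint n)) | y < c) y.
      by rewrite big_map big_enum_cond.
    rewrite -(perm_big _ (perm_cs : perm_eq _ _)).
    rewrite hcs big_cat /= [X in _ + X]big1_seq ?addr0; last first.
      move=> y /andP[ylt]; rewrite inE => /orP[/eqP yc|yin].
        by rewrite yc ltxx in ylt.
      by move/allP: post_ge => /(_ y yin); rewrite leNgt ylt.
    rewrite [X in _ <= X](bigID (fun y => y < c)) /= lerDl.
    rewrite big_seq_cond; apply: sumr_ge0 => y /andP[yin _]; apply: cs0.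
    by rewrite hcs mem_cat yin.
  have skk : forall k, c <= Sketch (p k) x.
    move=> k; have [p0k [pmono psum]] := hppd k.
    have xMk : x <= \sum_i p k i by rewrite -/(Mass (p k)) hmass.
    have [i /andP[hi1 hi2]] := @cell_exists _ _ _ _ p0k x0 xMk.
    have ci : c <= p k i.
      rewrite leNgt; apply/negP => pic.
      have : tail_ge (p k) i <= \sum_(t | C t < c) C t.
        have <- : \sum_(t : joint n | (i <= t k)%N) C t = tail_ge (p k) i.
          rewrite (partition_big (fun t : joint n => t k) (fun j => (i <= j)%N)) //.
          apply: eq_bigr => j hj; rewrite -Cmarg; apply: eq_bigl => t.
          by case: eqP => [->|]; rewrite ?andbT ?andbF.
        rewrite [X in X <= _]big_mkcond [X in _ <= X]big_mkcond /=.
        apply: ler_sum => t _; case: ifP => hk; case: ifP => hc //.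
        - have := le_lt_trans (Cle k t) (le_lt_trans (pmono _ _ hk) pic).
          by rewrite hc.
      move=> H; have := lt_le_trans (lt_le_trans h1 hi2) (le_trans H small).
      by rewrite ltxx.
    rewrite /Sketch (bigD1 i) //=.
    have -> : (tail_gt (p k) i < x) && (x <= tail_ge (p k) i) = true by apply/andP.
    apply: (le_trans ci); rewrite lerDl; apply: sumr_ge0 => j _.
    by case: ifP => _ //.
  have Pc : c <= Profile p x.
    by rewrite /Profile; apply: le_bigmin => // k _; exact: skk.
  have Ppos : 0 < Profile p x by apply: lt_le_trans Pc.
  rewrite /f /log2 ler_pM2r ?invr_gt0 // ler_ln ?posrE ?div1r ?invr_gt0 //.
  by rewrite lef_pV2 ?posrE.
have := @main_seq R f mf cs 0 cs0 _ H3.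
rewrite add0r sum_cs ent; apply.
by move=> x _; exact: f0.
Qed.
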